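(* Let $K$ be a finite abstract simplicial complex with vertex set $V$, and let $\{U_1,\dots,U_m\}$ be a hard partition of $V$ (every vertex lies in exactly one $U_i$). Form the topological pooled complex $\mathrm{Nrv}(\mathcal{U})$ and the matrices $\mathbf{S}_{q,p}$, $\mathbf{S}_p:=\mathbf{S}_{p,p}$ of the matrix implementation, both as described in the context. Then the topological and matrix formulations produce the same pooled simplicial complex. Concretely: for every $p\ge 0$, the $p$-simplices of $\mathrm{Nrv}(\mathcal{U})$ are exactly the $p$-subsets $\tau$ of clusters that index the (nonzero) columns of $\mathbf{S}_p$; and for every $p\ge 1$ and all such $\tau_{p-1}$, $\tau_p$, the entry $\big(\mathbf{S}_{p-1}^T\,|\mathbf{B}_p|\,\mathbf{S}_p\big)[\tau_{p-1},\tau_p]$ is nonzero if and only if $\tau_{p-1}$ is a face of $\tau_p$ in $\mathrm{Nrv}(\mathcal{U})$, i.e. $\mathbf{S}_{p-1}^T|\mathbf{B}_p|\mathbf{S}_p$ has the same support as the non-oriented $p$-th boundary matrix of $\mathrm{Nrv}(\mathcal{U})$.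
   Context: A $p$-simplex is a set of $p+1$ vertices. For a vertex $v$ of $K$, its star is $St(v)=\{\sigma\in K: v\in\sigma\}$. Topological formulation: for each cluster put $\widetilde U_i=\bigcup_{v\in U_i}St(v)$ and $\mathcal{U}=\{\widetilde U_i\}_{i=1}^m$; the nerve $\mathrm{Nrv}(\mathcal{U})$ is the simplicial complex on vertex set $\{1,\dots,m\}$ (one vertex per cluster) whose simplices are the nonempty sets $\tau\subseteq\{1,\dots,m\}$ with $\bigcap_{i\in\tau}\widetilde U_i\neq\emptyset$. Matrix formulation: $|\mathbf{B}_p|$ denotes the non-oriented boundary matrix of $K$ (rows indexed by $(p-1)$-simplices, columns by $p$-simplices, entry $1$ if the row simplex is a face of the column simplex and $0$ otherwise). $\mathbf{S}_0$ is the $n_0\times m$ matrix with $\mathbf{S}_0[v,U_j]=1$ if $v\in U_j$ and $0$ otherwise. For $q>0$, $\mathbf{S}_{q,0}$ has rows indexed by $q$-simplices $\sigma$ of $K$ and columns by clusters, with $\mathbf{S}_{q,0}[\sigma,U_j]=1$ if $\mathbf{S}_0[v,U_j]=1$ for some vertex $v\in\sigma$, and $0$ otherwise. For $0<p\le q$, $\mathbf{S}_{q,p}$ has rows indexed by $q$-simplices of $K$ and a column for each set $\tau=\{U_{a_0},\dots,U_{a_p}\}$ of $p+1$ distinct clusters, given by the entrywise product $\mathbf{S}_{q,p}[\cdot,\tau]=\mathbf{S}_{q,0}[\cdot,U_{a_0}]\odot\cdots\odot\mathbf{S}_{q,0}[\cdot,U_{a_p}]$; columns that are identically zero are discarded (those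 $\tau$ are not simplices of the pooled complex). The block matrix assembled from the $\mathbf{S}_{q,p}$ ($p\le q$) may additionally be row-normalized so each row sums to $1$; this positive rescaling does not change supports. The pooled boundary matrices are $\mathbf{B}_p^{\mathrm{pooled}}=\mathbf{S}_{p-1}^T|\mathbf{B}_p|\mathbf{S}_p$. *)

(* Defs.v *)
(* finite sets over finTypes, nat-valued 0/1 matrices as functions. *)
From mathcomp Require Import all_boot.
Set Implicit Arguments.
Unset Strict Implicit.
Unset Printing Implicit Defensive.

Definition is_simplicial_complex (V : finType) (K : {set {set V}}) : Prop :=
  [/\ set0 \notin K,
      (forall s t : {set V}, s \in K -> t \subset s -> t != set0 -> t \in K)
    & (forall v : V, [set v] \in K)].

Definition hard_partition (V : finType) (m : nat) (U : 'I_m -> {set V}) : Prop :=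
  (forall i, U i != set0) /\ (forall v : V, exists! i, v \in U i).

Definition simplices (V : finType) (K : {set {set V}}) (p : nat) : {set {set V}} :=
  [set s in K | #|s| == p.+1].

Definition star (V : finType) (K : {set {set V}}) (v : V) : {set {set V}} :=
  [set s in K | v \in s].

Definition tildeU (V : finType) (K : {set {set V}}) (m : nat)
  (U : 'I_m -> {set V}) (i : 'I_m) : {set {set V}} :=
  \bigcup_(v in U i) star K v.

Definition nerve (V : finType) (K : {set {set V}}) (m : nat)
  (U : 'I_m -> {set V}) : {set {set 'I_m}} :=
  [set tau : {set 'I_m} | (tau != set0) &&
     (\bigcap_(i in tau) tildeU K U i != set0)].

Definition nerve_simplices (V : finType) (K : {set {set V}}) (m : nat)
  (U : 'I_m -> {set V}) (p : nat) : {set {set 'I_m}} :=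
  [set tau in nerve K U | #|tau| == p.+1].

(* non-oriented boundary |B_p| entry (row: (p-1)-simplex r, column: p-simplex s) *)
Definition absB (V : finType) (r s : {set V}) : nat := (r \subset s).

(* S_{q,0}[s, U_j] : 1 iff S_0[v,U_j] = 1 for some vertex v of s
   (for a 0-simplex s = {v} this is exactly S_0[v,U_j]). *)
Definition Sq0 (V : finType) (m : nat) (U : 'I_m -> {set V})
  (s : {set V}) (j : 'I_m) : nat := [exists v in s, v \in U j].

Definition Sqp (V : finType) (m : nat) (U : 'I_m -> {set V})
  (s : {set V}) (tau : {set 'I_m}) : nat := \prod_(a in tau) Sq0 U s a.

(* Columns of S_p := S_{p,p}: (p+1)-sets of clusters whose column (over the
   p-simplices of K) is not identically zero. *)
Definition Scols (V : finType) (K : {set {set V}}) (m : nat)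
  (U : 'I_m -> {set V}) (p : nat) : {set {set 'I_m}} :=
  [set tau : {set 'I_m} | (#|tau| == p.+1) &&
     [exists s in simplices K p, Sqp U s tau != 0]].

Definition pooledB (V : finType) (K : {set {set V}}) (m : nat)
  (U : 'I_m -> {set V}) (p : nat) (tau' tau : {set 'I_m}) : nat :=
  \sum_(r in simplices K p.-1) \sum_(s in simplices K p)
     Sqp U r tau' * absB r s * Sqp U s tau.

Definition nerve_absB (m : nat) (tau' tau : {set 'I_m}) : nat := (tau' \subset tau).

(* Main.v *)
Require Import Defs.
From mathcomp Require Import all_boot.
Set Implicit Arguments. Unset Strict Implicit.

Section S.
Variables (V : finType) (m : nat) (U : 'I_m -> {set V}).
Hypothesis hp : hard_partition U.

Lemma Uuniq v i j : v \in U i -> v \in U j -> i = j.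
Proof.
case: hp => _ /(_ v) [k [_ H]] a b; by rewrite -(H i a) -(H j b).
Qed.

Lemma prod_bool (A : {set 'I_m}) (b : 'I_m -> bool) :
  (\prod_(a in A) (b a : nat) != 0) = [forall a in A, b a].
Proof.
case: (boolP [forall a in A, b a]) => [/forall_inP H|/forall_inP H].
  by rewrite big1 // => a /H ->.
apply/negbTE; rewrite negbK.
have [a aA nb] : exists2 a, a \in A & ~~ b a.
  apply/exists_inP; rewrite -negb_forall_in; by apply/forall_inP.
by rewrite (bigD1 a) //= (negbTE nb) mul0n.
Qed.

Variable i0 : 'I_m.
Definition f (v : V) : 'I_m := odflt i0 [pick i | v \in U i].

Lemma fU v : v \in U (f v).
Proof.
rewrite /f; case: pickP => [i //|H].
case: hp => _ /(_ v) [k [kv _]]; by rewrite H in kv.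
Qed.

Lemma fE {v i} : v \in U i -> f v = i.
Proof. move=> h; exact: Uuniq (fU v) h. Qed.

Lemma SqpE s tau : (Sqp U s tau != 0) = (tau \subset f @: s).
Proof.
rewrite /Sqp prod_bool; apply/forall_inP/subsetP => H i /H.
  case/existsP => v /andP [vs vi]; apply/imsetP; exists v => //; by rewrite (fE vi).
move=> /imsetP [v vs ->]; apply/existsP; exists v; by rewrite vs fU.
Qed.

Lemma pick_sub (s : {set V}) (tau : {set 'I_m}) :
  tau \subset f @: s -> exists t : {set V}, [/\ t \subset s, f @: t = tau & #|t| = #|tau|].
Proof.
move=> sub.
case: (set_0Vmem s) => [s0|[v0 v0s]].
  move: sub; rewrite s0 imset0 subset0 => /eqP ->; exists set0.
  by rewrite sub0set imset0 !cards0.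
pose g i := odflt v0 [pick v in s | f v == i].
have gP i : i \in tau -> g i \in s /\ f (g i) = i.
  move=> /(subsetP sub) /imsetP [v vs ->]; rewrite /g; case: pickP => [w /andP [ws /eqP]|H] //=.
  by have := H v; rewrite vs eqxx.
exists (g @: tau); split.
- apply/subsetP => x /imsetP [i it ->]; exact: (gP i it).1.
- rewrite -imset_comp; apply/setP => i; apply/imsetP/idP => [[j jt ->]|it].
    by rewrite /= (gP j jt).2.
  by exists i => //=; rewrite (gP i it).2.
- apply: card_in_imset => i j it jt e.
  by rewrite -(gP i it).2 e (gP j jt).2.
Qed.
End S.

Theorem theorem4p1 (V : finType) (K : {set {set V}}) (m : nat)
  (U : 'I_m -> {set V}) :
  is_simplicial_complex K -> hard_partition U ->
  (forall p : nat, nerve_simplices K U p = Scols K U p) /\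
  (forall p : nat, 1 <= p -> forall tau' tau : {set 'I_m},
     tau' \in Scols K U p.-1 -> tau \in Scols K U p ->
     (pooledB K U p tau' tau != 0) = (nerve_absB tau' tau != 0)).
Proof.
case=> K0 Kclosed _ hp; split.
  move=> p; apply/setP => tau; rewrite !inE.
  case: (set_0Vmem tau) => [->|[i0 it]].
    by rewrite eqxx /= cards0.
  have tau0 : tau != set0 by apply/set0Pn; exists i0.
  rewrite tau0 /=; apply/idP/idP.
  - case/andP => /set0Pn [s /bigcapP sI] /eqP ct; rewrite ct eqxx /=.
    have sK : s \in K.
      by move: (sI i0 it); rewrite /tildeU => /bigcupP [v _]; rewrite inE => /andP [].
    have : tau \subset f U i0 @: s.
      apply/subsetP => i /sI; rewrite /tildeU => /bigcupP [v vi]; rewrite inE => /andP [_ vs].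
      by apply/imsetP; exists v => //; rewrite (fE hp i0 vi).
    case/pick_sub => t [ts ft ctt].
    apply/existsP; exists t; rewrite !inE (SqpE hp i0) ft subxx andbT ctt ct eqxx andbT.
    apply: (Kclosed s) => //; apply/set0Pn; case/set0Pn: tau0 => i.
    by rewrite -ft => /imsetP [v vt _]; exists v.
  - case/andP => /eqP ct /exists_inP [s]; rewrite !inE => /andP [sK _].
    rewrite (SqpE hp i0) // => sub; rewrite ct eqxx andbT; apply/set0Pn; exists s.
    apply/bigcapP => i /(subsetP sub) /imsetP [v vs ->].
    apply/bigcupP; exists v; first exact: fU.
    by rewrite inE sK vs.
move=> p p1 tau' tau; rewrite !inE => /andP [/eqP ct' _] /andP [/eqP ct /exists_inP [s0 s0S s0T]].
have [i0 it0] : exists i0, i0 \in tau.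
  by apply/set0Pn; rewrite -card_gt0 ct.
have clE s : s \in simplices K p -> tau \subset f U i0 @: s -> f U i0 @: s = tau.
  rewrite inE => /andP [_ /eqP cs] sub; apply/esym/eqP; rewrite eqEcard sub ct -cs.
  exact: leq_imset_card.
rewrite /pooledB /nerve_absB (_ : ((tau' \subset tau : nat) != 0) = (tau' \subset tau)); last by case: (tau' \subset tau).
apply/idP/idP.
- rewrite sum_nat_eq0 negb_forall_in => /exists_inP [r rS]; rewrite sum_nat_eq0 negb_forall_in => /exists_inP [s sS].
  rewrite /= !muln_eq0 !negb_or => /andP [/andP [h1 h2] h3].
  rewrite (SqpE hp i0) // in h1; rewrite (SqpE hp i0) // in h3.
  rewrite -(clE s sS h3); apply: (subset_trans h1); apply: imsetS.
  by move: h2; rewrite /absB; case: (r \subset s).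
- move=> sub; rewrite (SqpE hp i0) // in s0T.
  have e := clE s0 (s0S) s0T.
  have s0S' := s0S; rewrite inE in s0S'; case/andP: s0S' => s0K /eqP cs0.
  have inj : {in s0 &, injective (f U i0)}.
    by apply/imset_injP; rewrite e ct cs0.
  pose r := [set v in s0 | f U i0 v \in tau'].
  have rs : r \subset s0 by apply/subsetP => v; rewrite inE => /andP [].
  have fr : f U i0 @: r = tau'.
    apply/setP => i; apply/imsetP/idP => [[v]|it].
      by rewrite inE => /andP [_ h] ->.
    have : i \in f U i0 @: s0 by rewrite e (subsetP sub).
    by case/imsetP => v vs ei; exists v => //; rewrite inE vs -ei it.
  have cr : #|r| = p.
    rewrite -(card_in_imset (sub_in2 (subsetP rs) inj)) fr ct' prednK //.
  rewrite sum_nat_eq0; apply/negP => /forall_inP /= H.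
  have rS : r \in simplices K p.-1.
    rewrite inE cr prednK // eqxx andbT.
    apply: (Kclosed s0) => //; rewrite -card_gt0 cr //.
  have h1 : Sqp U r tau' != 0 by rewrite (SqpE hp i0) fr.
  have h3 : Sqp U s0 tau != 0 by rewrite (SqpE hp i0).
  move: (H r rS); rewrite sum_nat_eq0 => /forall_inP /(_ s0 s0S).
  by rewrite /absB rs !muln_eq0 (negbTE h1) (negbTE h3).
Qed.
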